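(* For the graph $G$ defined below and for every finite set $C$, there is no distinguishing $C$-colouring of the vertex set of $G$.
   Context: Let $\mathbb Q^+=\{q^+: q\in\mathbb Q\}$ and $\mathbb Q^-=\{q^-: q\in\mathbb Q\}$ be two disjoint copies of $\mathbb Q$. $G$ is the simple undirected graph with vertex set $V=\mathbb Q^+\cup\mathbb Q^-$ in which the edges are exactly the pairs $\{q^+,r^-\}$ with $q,r\in\mathbb Q$ and $q<r$ (there are no edges inside $\mathbb Q^+$ or inside $\mathbb Q^-$). A $C$-colouring of $V$ is a map $c\colon V\to C$; it is distinguishing if the only automorphism $\varphi$ of $G$ with $c(\varphi(v))=c(v)$ for all $v\in V$ is the identity. *)

(* Defs.v *)
From HB Require Import structures.
From mathcomp Require Import all_boot all_order all_algebra.
Set Implicit Arguments. Unset Strict Implicit. Unset Printing Implicit Defensive.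
Import Order.TTheory GRing.Theory Num.Theory.
Local Open Scope ring_scope.

(* Vertex set V = Q^+ (inl q = q^+) disjoint union Q^- (inr q = q^-). *)
Definition vtx : Type := (rat + rat)%type.
Definition plus (q : rat) : vtx := inl q.
Definition minus (q : rat) : vtx := inr q.

Definition adjG (u v : vtx) : bool :=
  match u, v with
  | inl q, inr r => q < r
  | inr r, inl q => q < r
  | _, _ => false
  end.

Definition is_autG (phi : vtx -> vtx) : Prop :=
  bijective phi /\ forall u v : vtx, adjG (phi u) (phi v) = adjG u v.

Definition distinguishing (C : Type) (c : vtx -> C) : Prop :=
  forall phi : vtx -> vtx,
    is_autG phi -> (forall v, c (phi v) = c v) -> forall v, phi v = v.

(* Main.v *)
Require Import Defs.
From mathcomp Require Import all_boot all_order all_algebra.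
From mathcomp Require Import lra.
From Stdlib Require Import ClassicalEpsilon Classical.
Set Implicit Arguments. Unset Strict Implicit. Unset Printing Implicit Defensive.
Import Order.TTheory GRing.Theory Num.Theory.
Local Open Scope ring_scope.

Definition dense (K : eqType) (chi : rat -> K) (k : K) (a b : rat) : Prop :=
  forall x y, a <= x -> x < y -> y <= b -> exists z, x < z /\ z < y /\ chi z = k.

Definition nice (K : eqType) (chi : rat -> K) (a b : rat) : Prop :=
  a < b /\ forall k, (exists z, a < z /\ z < b /\ chi z = k) -> dense chi k a b.

Lemma step1 (K : eqType) (chi : rat -> K) (s : seq K) :
  exists a b, a < b /\ forall k, k \in s ->
    (forall z, a < z -> z < b -> chi z <> k) \/ dense chi k a b.
Proof.
elim: s => [|k s [a [b [ab H]]]].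
  by exists 0, 1; split => // k; rewrite in_nil.
case: (classic (dense chi k a b)) => D.
  exists a, b; split => // k'; rewrite inE => /orP [/eqP -> |/H //]; by right.
have [x [y [ax [xy [yb Hn]]]]] : exists x y, a <= x /\ x < y /\ y <= b /\
    forall z, x < z -> z < y -> chi z <> k.
  apply: NNPP => Hc; apply: D => x y ax xy yb; apply: NNPP => Hz; apply: Hc.
  exists x, y; do 3 split => //; move=> z xz zy e; apply: Hz; by exists z.
exists x, y; split => // k'; rewrite inE => /orP [/eqP -> |/H]; first by left.
case=> [E|D']; [left => z xz zy; apply: E; lra | right => u v xu uv vb; apply: D'; lra].
Qed.

Lemma nice_exists (K : finType) (chi : rat -> K) : exists a b, nice chi a b.
Proof.
have [a [b [ab H]]] := step1 chi (enum K).
exists a, b; split => // k [z [az [zb e]]].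
case: (H k (mem_enum _ _)) => // E; exfalso; exact: (E z az zb e).
Qed.

Definition sw (u : rat * rat) := (u.2, u.1).

Definition good (K : eqType) (chi : rat -> K) a b (L : seq (rat * rat)) : Prop :=
  (forall u, u \in L -> [/\ a < u.1, u.1 < b, a < u.2, u.2 < b & chi u.1 = chi u.2]) /\
  (forall u v, u \in L -> v \in L -> (u.1 < v.1) = (u.2 < v.2)).

Lemma swK : involutive sw. Proof. by case. Qed.

Lemma mem_sw (L : seq (rat * rat)) u : (u \in map sw L) = (sw u \in L).
Proof. by rewrite -{1}(swK u) (mem_map (can_inj swK)). Qed.

Lemma good_sw (K : eqType) (chi : rat -> K) a b L : good chi a b L -> good chi a b (map sw L).
Proof.
case=> H1 H2; split.
  move=> u; rewrite mem_sw => /H1 [] /=; split => //.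
move=> u v; rewrite !mem_sw => /H2 h /h /= ->; done.
Qed.

Definition mx (x y : rat) := if x < y then y else x.
Definition mn (x y : rat) := if x < y then x else y.

Lemma foldr_mx a (s : seq rat) : a <= foldr mx a s /\ (forall x, x \in s -> x <= foldr mx a s)
  /\ foldr mx a s \in a :: s.
Proof.
elim: s => [|y s [h1 [h2 h3]]] /=; first by rewrite inE eqxx.
rewrite /mx; case: ifP => hy; (split; [lra|split]).
- move=> x; rewrite inE => /orP [/eqP -> |/h2]; lra.
- move: h3; rewrite !inE => /orP [->//|->]; by rewrite !orbT.
- move=> x; rewrite inE => /orP [/eqP -> |/h2]; lra.
- by rewrite !inE eqxx orbT.
Qed.

Lemma foldr_mn b (s : seq rat) : foldr mn b s <= b /\ (forall x, x \in s -> foldr mn b s <= x)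
  /\ foldr mn b s \in b :: s.
Proof.
elim: s => [|y s [h1 [h2 h3]]] /=; first by rewrite inE eqxx.
rewrite /mn; case: ifP => hy; (split; [lra|split]).
- move=> x; rewrite inE => /orP [/eqP -> |/h2]; lra.
- by rewrite !inE eqxx orbT.
- move=> x; rewrite inE => /orP [/eqP -> |/h2]; lra.
- move: h3; rewrite !inE => /orP [->//|->]; by rewrite !orbT.
Qed.

Lemma forth (K : eqType) (chi : rat -> K) a b L x : nice chi a b -> good chi a b L ->
  a < x -> x < b -> exists y, good chi a b ((x, y) :: L).
Proof.
move=> [ab Hn] [G1 G2] ax xb.
case: (boolP (has (fun u => u.1 == x) L)) => [/hasP [u uL /eqP ux]|hn].
  exists u.2.
  have E : (x, u.2) = u by rewrite -ux; case: (u).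
  have M : forall v, v \in (x, u.2) :: L -> v \in L.
    by move=> v; rewrite inE E => /orP [/eqP ->|].
  split; [move=> v /M; exact: G1 | move=> v w /M h /M; exact: G2].
set lows := [seq u.2 | u <- L & u.1 < x].
set highs := [seq u.2 | u <- L & x < u.1].
have [l1 [l2 l3]] := foldr_mx a lows.
have [h1 [h2 h3]] := foldr_mn b highs.
set l := foldr mx a lows in l1 l2 l3.
set h := foldr mn b highs in h1 h2 h3.
have lh : l < h.
  move: l3 h3; rewrite !inE => /orP [/eqP ->|/mapP [u]]; last (rewrite mem_filter => /andP [ux uL] ->);
   move=> /orP [/eqP ->|/mapP [v]]; try (rewrite mem_filter => /andP [xv vL] ->).
  - done.
  - by case: (G1 v vL).
  - by case: (G1 u uL).
  - by rewrite -(G2 u v uL vL); lra.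
have [y [ly [yh ey]]] := Hn (chi x) (ex_intro _ x (conj ax (conj xb erefl))) l h l1 lh h1.
have Hv : forall v, v \in L -> (x < v.1) = (y < v.2) /\ (v.1 < x) = (v.2 < y).
  move=> v vL.
  have nx : v.1 != x by apply: contraNneq hn => e; apply/hasP; exists v => //; rewrite e.
  have A : x < v.1 -> h <= v.2 by move=> xv; apply: h2; apply/mapP; exists v => //; rewrite mem_filter xv.
  have B : v.1 < x -> v.2 <= l by move=> vx; apply: l2; apply/mapP; exists v => //; rewrite mem_filter vx.
  have T : (v.1 < x) || (x < v.1) by rewrite -neq_lt.
  split; apply/idP/idP => H.
  - by have := A H; lra.
  - case/orP: T => // /B; lra.
  - by have := B H; lra.
  - case/orP: T => // /A; lra.
exists y; split.
  move=> u; rewrite inE => /orP [/eqP -> /=|/G1 //]; split => //; lra.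
move=> u v; rewrite !inE => /orP [/eqP -> |uL] /orP [/eqP -> |vL] /=.
- by rewrite !ltxx.
- by case: (Hv v vL).
- by case: (Hv u uL).
- exact: G2.
Qed.

Lemma back (K : eqType) (chi : rat -> K) a b L y : nice chi a b -> good chi a b L ->
  a < y -> y < b -> exists x, good chi a b ((x, y) :: L).
Proof.
move=> N G ay yb; have [x Gx] := forth N (good_sw G) ay yb.
exists x; have := good_sw Gx; by rewrite /= (mapK swK).
Qed.

Definition inI (a b q : rat) := (a < q) && (q < b).

Definition ext (K : eqType) (chi : rat -> K) a b L x : seq (rat * rat) :=
  if inI a b x then (x, epsilon (inhabits 0) (fun y => good chi a b ((x, y) :: L))) :: L else L.
Definition extb (K : eqType) (chi : rat -> K) a b L y : seq (rat * rat) :=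
  if inI a b y then (epsilon (inhabits 0) (fun x => good chi a b ((x, y) :: L)), y) :: L else L.
Definition qn (n : nat) : rat := odflt 0 (unpickle n).

Fixpoint seqL (K : eqType) (chi : rat -> K) a b x0 x1 n : seq (rat * rat) :=
  match n with
  | 0 => [:: (x0, x1)]
  | m.+1 => extb chi a b (ext chi a b (seqL chi a b x0 x1 m) (qn m)) (qn m)
  end.

Lemma ext_good (K : eqType) (chi : rat -> K) a b L x : nice chi a b -> good chi a b L ->
  good chi a b (ext chi a b L x).
Proof.
move=> N G; rewrite /ext /inI; case: ifP => // /andP [ax xb].
apply: (epsilon_spec (inhabits 0) (fun y => good chi a b ((x, y) :: L))).
exact: forth.
Qed.

Lemma extb_good (K : eqType) (chi : rat -> K) a b L x : nice chi a b -> good chi a b L ->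
  good chi a b (extb chi a b L x).
Proof.
move=> N G; rewrite /extb /inI; case: ifP => // /andP [ax xb].
apply: (epsilon_spec (inhabits 0) (fun y => good chi a b ((y, x) :: L))).
exact: back.
Qed.

Lemma seqL_good (K : eqType) (chi : rat -> K) a b x0 x1 n : nice chi a b ->
  good chi a b [:: (x0, x1)] -> good chi a b (seqL chi a b x0 x1 n).
Proof.
move=> N G0; elim: n => [|n IH] //=.
by apply: extb_good => //; apply: ext_good.
Qed.

Lemma ext_sub (K : eqType) (chi : rat -> K) a b L x u : u \in L -> u \in ext chi a b L x.
Proof. by rewrite /ext; case: ifP => // _ h; rewrite inE h orbT. Qed.
Lemma extb_sub (K : eqType) (chi : rat -> K) a b L x u : u \in L -> u \in extb chi a b L x.
Proof. by rewrite /extb; case: ifP => // _ h; rewrite inE h orbT. Qed.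

Lemma seqL_sub (K : eqType) (chi : rat -> K) a b x0 x1 m n u :
  (m <= n)%N -> u \in seqL chi a b x0 x1 m -> u \in seqL chi a b x0 x1 n.
Proof.
elim: n => [|n IH]; first by rewrite leqn0 => /eqP ->.
rewrite leq_eqVlt => /orP [/eqP -> //| ]; rewrite ltnS => /IH h /h hu /=.
by apply: extb_sub; apply: ext_sub.
Qed.

Lemma qn_pickle q : qn (pickle q) = q.
Proof. by rewrite /qn pickleK. Qed.

Lemma seqL_dom (K : eqType) (chi : rat -> K) a b x0 x1 q : inI a b q ->
  exists y, (q, y) \in seqL chi a b x0 x1 (pickle q).+1.
Proof.
move=> hq; rewrite /= qn_pickle /ext hq.
eexists; apply: extb_sub; exact: mem_head.
Qed.

Lemma seqL_ran (K : eqType) (chi : rat -> K) a b x0 x1 q : inI a b q ->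
  exists x, (x, q) \in seqL chi a b x0 x1 (pickle q).+1.
Proof.
move=> hq; rewrite /= qn_pickle /extb hq.
eexists; exact: mem_head.
Qed.

Lemma good_func (K : eqType) (chi : rat -> K) a b L p y y' : good chi a b L ->
  (p, y) \in L -> (p, y') \in L -> y = y'.
Proof.
move=> [_ G] h h'; have e1 := G _ _ h h'; have e2 := G _ _ h' h.
rewrite /= ltxx in e1 e2.
apply/eqP; rewrite eq_le !leNgt; by rewrite -e1 -e2.
Qed.

Lemma good_inj (K : eqType) (chi : rat -> K) a b L p p' y : good chi a b L ->
  (p, y) \in L -> (p', y) \in L -> p = p'.
Proof.
move=> [_ G] h h'; have e1 := G _ _ h h'; have e2 := G _ _ h' h.
rewrite /= ltxx in e1 e2.
apply/eqP; rewrite eq_le !leNgt; by rewrite e1 e2.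
Qed.

Lemma Qaut (K : finType) (chi : rat -> K) : exists f : rat -> rat,
  (forall q r, (f q < f r) = (q < r)) /\ (forall y, exists q, f q = y) /\
  (forall q, chi (f q) = chi q) /\ exists q, f q != q.
Proof.
have [a [b N]] := nice_exists chi.
have [ab Hn] := N.
have [x0 [ax0 x0b]] : exists x0, a < x0 /\ x0 < b by exists ((a + b) / 2); split; lra.
have [x1 [x01 [x1b e1]]] := Hn (chi x0) (ex_intro _ x0 (conj ax0 (conj x0b erefl))) x0 b (ltW ax0) x0b (lexx b).
have G0 : good chi a b [:: (x0, x1)].
  split => [u|u v]; rewrite !inE.
    move=> /eqP -> /=; split; [lra|lra|lra|lra|by rewrite e1].
  by move=> /eqP -> /eqP ->; rewrite /= !ltxx.
set S := seqL chi a b x0 x1.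
have GS : forall n, good chi a b (S n) by move=> n; exact: seqL_good.
have common : forall u v m n, u \in S m -> v \in S n -> u \in S (maxn m n) /\ v \in S (maxn m n).
  move=> u v m n hu hv; split; apply: seqL_sub; [exact: leq_maxl | exact: hu | exact: leq_maxr | exact: hv].
pose f q := if inI a b q then epsilon (inhabits 0) (fun y => exists n, (q, y) \in S n) else q.
have fspec : forall q, inI a b q -> exists n, (q, f q) \in S n.
  move=> q hq; rewrite /f hq; apply: (epsilon_spec (inhabits 0) (fun y => exists n, (q, y) \in S n)).
  have [y hy] := seqL_dom chi x0 x1 hq; by exists y, (pickle q).+1.
have frng : forall q, inI a b q -> a < f q /\ f q < b.
  move=> q hq; have [n hn] := fspec q hq; by case: ((GS n).1 _ hn).
have fout : forall q, ~~ inI a b q -> f q = q by move=> q hq; rewrite /f (negbTE hq).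
clearbody f.
have nin : forall q, ~~ inI a b q -> q <= a \/ b <= q.
  by move=> q; rewrite /inI negb_and -!leNgt => /orP [] ->; [left|right].
have inab : forall q, inI a b q -> a < q /\ q < b by move=> q /andP.
exists f; split; [|split; [|split]].
- move=> q r.
  case: (boolP (inI a b q)) => hq; case: (boolP (inI a b r)) => hr.
  + have [n hn] := fspec q hq; have [m hm] := fspec r hr.
    have [h1 h2] := common _ _ _ _ hn hm.
    by rewrite ((GS _).2 _ _ h1 h2).
  + rewrite (fout r hr); have [r1 r2] := frng q hq; have [q1 q2] := inab q hq.
    by case: (nin r hr) => hh; apply/idP/idP; lra.
  + rewrite (fout q hq); have [r1 r2] := frng r hr; have [q1 q2] := inab r hr.
    by case: (nin q hq) => hh; apply/idP/idP; lra.
  + by rewrite (fout q hq) (fout r hr).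
- move=> y; case: (boolP (inI a b y)) => hy; last by exists y; rewrite fout.
  have [x hx] := seqL_ran chi x0 x1 hy.
  have hxi : inI a b x by case: ((GS _).1 _ hx) => /= ? ? _ _ _; apply/andP.
  have [n hn] := fspec x hxi; exists x.
  have [h1 h2] := common _ _ _ _ hn hx.
  exact: good_func (GS _) h1 h2.
- move=> q; case: (boolP (inI a b q)) => hq; last by rewrite fout.
  have [n hn] := fspec q hq; by case: ((GS n).1 _ hn) => _ _ _ _ ->.
- exists x0; have hx0 : inI a b x0 by apply/andP.
  have [n hn] := fspec x0 hx0.
  have h0 : (x0, x1) \in S 0 by rewrite mem_head.
  have [h1 h2] := common _ _ _ _ hn h0.
  rewrite (good_func (GS _) h1 h2); by rewrite gt_eqF.
Qed.

Theorem mainTheorem4 (C : finType) (c : vtx -> C) : ~ distinguishing c.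
Proof.
move=> D.
have [f [fmono [fsurj [fcol [q0 hq0]]]]] := @Qaut _ (fun q => (c (inl q), c (inr q))).
have finj : injective f.
  by move=> q r e; apply/eqP; rewrite eq_le !leNgt -(fmono q r) -(fmono r q) e ltxx.
pose g y := epsilon (inhabits 0) (fun q => f q = y).
have gK : forall y, f (g y) = y.
  move=> y; apply: (epsilon_spec (inhabits 0) (fun q => f q = y)); exact: fsurj.
pose phi (v : vtx) : vtx := match v with inl q => inl (f q) | inr q => inr (f q) end.
pose psi (v : vtx) : vtx := match v with inl q => inl (g q) | inr q => inr (g q) end.
have Aut : is_autG phi.
  split.
    exists psi.
      case=> x /=; congr (_ _); apply: finj; by rewrite gK.
    by case=> x /=; rewrite gK.
  by case=> x; case=> y //=.
have Col : forall v, c (phi v) = c v.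
  case=> x /=; have := fcol x; by case.
have := D phi Aut Col (inl q0) => /= [[]] e.
by rewrite e eqxx in hq0.
Qed.
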